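(* The bounds $LB$ and $UB$ converge to the continuous Erlang-C function uniformly in the safety factor: $$\lim_{\lambda\to\infty}\sup_{\beta>0}\big[\tilde\alpha(\beta,\lambda)-LB(\beta,\lambda)\big]=0,\qquad \lim_{\lambda\to\infty}\sup_{\beta>0}\big[UB(\beta,\lambda)-\tilde\alpha(\beta,\lambda)\big]=0.$$
   Context: $\phi,\Phi$ are the standard normal density and distribution function. For $\lambda>0$ and real $n\ge 0$, the continuous Erlang-C function is $\bar\alpha(n,\lambda)=\min\Big\{1,\big[\lambda\int_0^\infty t e^{-\lambda t}(1+t)^{n-1}\,dt\big]^{-1}\Big\}$ (for $n\ge\lambda$ the minimum is attained by the second term; for integer $n>\lambda$ it equals the Erlang-C probability that an arriving customer waits in an $M/M/n$ queue with arrival rate $\lambda$ and service rate 1). Set $\tilde\alpha(\beta,\lambda)=\bar\alpha(\lambda+\beta\sqrt\lambda,\lambda)$ for $\beta\ge0$. For $\lambda>0,\beta\ge 0$ set $n=\lambda+\beta\sqrt{\lambda}$, $\rho=\lambda/n$, $a=\sqrt{-2n(1-\rho+\ln\rho)}$, $\gamma=(n-\lambda)/\sqrt{n}$, and $UB(\beta,\lambda)=\left[\rho+\gamma\left(\frac{\Phi(a)}{\phi(a)}+\frac{2}{3\sqrt{n}}\right)\right]^{-1}$, $LB(\beta,\lambda)=\left[\rho+\gamma\left(\frac{\Phi(a)}{\phi(a)}+\frac{2}{3\sqrt{n}}+\frac{1}{\phi(a)(12n-1)}\right)\right]^{-1}$. It is known (Janssen, van Leeuwaarden and Zwart) that $LB(\beta,\lambda)\le\tilde\alpha(\beta,\lambda)\le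 UB(\beta,\lambda)$ for all $\lambda>0$, $\beta>0$. *)

(* Defs.v *)
From Stdlib Require Import Reals Lra ClassicalEpsilon.
Open Scope R_scope.

Definition improper_int_0_inf (f : R -> R) (l : R) : Prop :=
  forall eps, eps > 0 -> exists M, forall b, b > M ->
    exists pr : Riemann_integrable f 0 b, Rabs (RiemannInt pr - l) < eps.

Definition improper_int_minf (f : R -> R) (a l : R) : Prop :=
  forall eps, eps > 0 -> exists M, forall c, c < - M ->
    exists pr : Riemann_integrable f c a, Rabs (RiemannInt pr - l) < eps.

Definition phi (x : R) : R := exp (- (x ^ 2) / 2) / sqrt (2 * PI).

Definition Phi (a : R) : R :=
  epsilon (inhabits 0) (fun l => improper_int_minf phi a l).

Definition erlang_integral (n lam : R) : R :=
  epsilon (inhabits 0) (fun l =>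
    improper_int_0_inf (fun t => t * exp (- lam * t) * Rpower (1 + t) (n - 1)) l).

Definition alpha_bar (n lam : R) : R :=
  Rmin 1 (/ (lam * erlang_integral n lam)).

Definition alpha_tilde (beta lam : R) : R :=
  alpha_bar (lam + beta * sqrt lam) lam.

Definition n_of (beta lam : R) : R := lam + beta * sqrt lam.
Definition rho_of (beta lam : R) : R := lam / n_of beta lam.
Definition a_of (beta lam : R) : R :=
  sqrt (- 2 * n_of beta lam * (1 - rho_of beta lam + ln (rho_of beta lam))).
Definition gamma_of (beta lam : R) : R :=
  (n_of beta lam - lam) / sqrt (n_of beta lam).

Definition UB (beta lam : R) : R :=
  / (rho_of beta lam + gamma_of beta lam *
       (Phi (a_of beta lam) / phi (a_of beta lam) + 2 / (3 * sqrt (n_of beta lam)))).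

Definition LB (beta lam : R) : R :=
  / (rho_of beta lam + gamma_of beta lam *
       (Phi (a_of beta lam) / phi (a_of beta lam) + 2 / (3 * sqrt (n_of beta lam))
        + 1 / (phi (a_of beta lam) * (12 * n_of beta lam - 1)))).

(* lim_{lam -> oo} sup_{beta > 0} f beta lam = 0, written out:
   for every eps > 0 there is L such that for lam > L the supremum lies in
   [-eps, eps], i.e. every value is <= eps and some value is >= -eps. *)
Definition uniform_sup_limit_zero (f : R -> R -> R) : Prop :=
  forall eps, eps > 0 -> exists L, forall lam, lam > L ->
    (forall beta, beta > 0 -> f beta lam <= eps) /\
    (exists beta, beta > 0 /\ - eps <= f beta lam).

(* Main.v *)
Require Import Defs.
From Stdlib Require Import Reals.
From Stdlib Require Import Reals Lra Psatz ClassicalEpsilon Classical.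
From Coquelicot Require Import Coquelicot.
Open Scope R_scope.

Lemma incr_mvt (f df : R -> R) a b : a <= b ->
  (forall x, a < x < b -> is_derive f x (df x)) ->
  (forall x, a < x < b -> 0 <= df x) ->
  (forall x, a <= x <= b -> continuity_pt f x) -> f a <= f b.
Proof.
  intros Hab Hd Hp Hc.
  destruct (Req_dec a b) as [->|Hne]; [lra|].
  assert (pr1 : forall c, a < c < b -> derivable_pt f c).
  { intros c Hc'. exists (df c). apply is_derive_Reals. now apply Hd. }
  assert (pr2 : forall c, a < c < b -> derivable_pt id c).
  { intros c _. apply derivable_pt_id. }
  destruct (MVT f id a b pr1 pr2) as [c [P HP]]; try lra; auto.
  { intros c _. apply derivable_continuous_pt, derivable_pt_id. }
  rewrite (derive_pt_eq_0 f c (df c) (pr1 c P)) in HP.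
  2: { apply is_derive_Reals. now apply Hd. }
  rewrite (derive_pt_eq_0 id c 1 (pr2 c P)) in HP.
  2: { apply derivable_pt_lim_id. }
  unfold id in HP. specialize (Hp c P). nra.
Qed.

Lemma mvt_abs (D K dD dK : R -> R) a b : a <= b ->
  (forall x, a < x < b -> is_derive D x (dD x)) ->
  (forall x, a < x < b -> is_derive K x (dK x)) ->
  (forall x, a < x < b -> Rabs (dD x) <= dK x) ->
  (forall x, a <= x <= b -> continuity_pt D x) ->
  (forall x, a <= x <= b -> continuity_pt K x) ->
  Rabs (D b - D a) <= K b - K a.
Proof.
  intros Hab HD HK Hb CD CK.
  assert (H1 := incr_mvt (fun x => K x - D x) (fun x => dK x - dD x) a b Hab).
  assert (H2 := incr_mvt (fun x => K x + D x) (fun x => dK x + dD x) a b Hab).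
  simpl in *.
  assert (K a - D a <= K b - D b).
  { apply H1.
    - intros x Hx. apply (is_derive_minus K D); auto.
    - intros x Hx. specialize (Hb x Hx). apply Rabs_le_between in Hb. lra.
    - intros x Hx. apply continuity_pt_minus; auto. }
  assert (K a + D a <= K b + D b).
  { apply H2.
    - intros x Hx. apply (is_derive_plus K D); auto.
    - intros x Hx. specialize (Hb x Hx). apply Rabs_le_between in Hb. lra.
    - intros x Hx. apply continuity_pt_plus; auto. }
  apply Rabs_le. lra.
Qed.

Lemma mono_lim (f : R -> R) (A B : R) :
  (forall x y, A <= x <= y -> f x <= f y) -> (forall x, A <= x -> f x <= B) ->
  exists l, (forall x, A <= x -> f x <= l) /\ l <= B /\
    (forall eps, eps > 0 -> exists M, A <= M /\ forall x, x > M -> Rabs (f x - l) < eps).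
Proof.
  intros Hm Hb.
  set (Ee := fun y => exists x, A <= x /\ y = f x).
  destruct (completeness Ee) as [l [Hub Hlub]].
  { exists B. intros y [x [Hx ->]]. now apply Hb. }
  { exists (f A). exists A. split; lra. }
  exists l. split; [|split].
  - intros x Hx. apply Hub. exists x. auto.
  - apply Hlub. intros y [x [Hx ->]]. now apply Hb.
  - intros eps Heps.
    destruct (classic (exists x, A <= x /\ l - eps < f x)) as [[x [Hx Hfx]]|Hn].
    + exists x. split; auto. intros y Hy.
      assert (f x <= f y) by (apply Hm; lra).
      assert (f y <= l) by (apply Hub; exists y; split; [lra|auto]).
      apply Rabs_lt_between. lra.
    + exfalso.
      assert (l <= l - eps); [|lra].
      apply Hlub. intros y [x [Hx ->]].
      destruct (Rle_dec (f x) (l - eps)); auto.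
      exfalso. apply Hn. exists x. split; auto. lra.
Qed.

Definition Eg (s : R) : R := exp (- (s ^ 2) / 2).

Lemma Eg_der s : ex_derive Eg s.
Proof. unfold Eg. auto_derive. auto. Qed.

Lemma Eg_cont s : continuous Eg s.
Proof. apply (@ex_derive_continuous R_AbsRing R_NormedModule), Eg_der. Qed.

Lemma Eg_ex c d : ex_RInt Eg c d.
Proof. apply (@ex_RInt_continuous R_CompleteNormedModule). intros; apply Eg_cont. Qed.

Lemma Eg_pos s : 0 < Eg s.
Proof. apply exp_pos. Qed.

Lemma exp_le_inc x y : x <= y -> exp x <= exp y.
Proof. intros [H|H]; [left; now apply exp_increasing|rewrite H; lra]. Qed.

Lemma Eg_bound z : Eg z <= exp (1/2) * exp z.
Proof.
  unfold Eg. rewrite <- exp_plus. apply exp_le_inc. assert (H := Rle_0_sqr (z+1)). unfold Rsqr in H. simpl. lra.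
Qed.

Lemma Eg_int_bound c a : c <= a -> RInt Eg c a <= exp (1/2) * exp a.
Proof.
  intros H.
  assert (Hi : is_RInt (fun x => exp (1/2) * exp x) c a (minus (exp (1/2) * exp a) (exp (1/2) * exp c))).
  { apply (is_RInt_derive (fun x => exp (1/2) * exp x)).
    - intros x _. auto_derive; auto. ring.
    - intros x _. apply (@ex_derive_continuous R_AbsRing R_NormedModule). auto_derive. auto. }
  apply (is_RInt_unique (V:=R_CompleteNormedModule)) in Hi.
  apply Rle_trans with (RInt (fun x => exp (1/2) * exp x) c a).
  - apply RInt_le; auto. apply Eg_ex. apply (@ex_RInt_continuous R_CompleteNormedModule).
    intros; apply (@ex_derive_continuous R_AbsRing R_NormedModule); auto_derive; auto.
    intros; apply Eg_bound.
  - rewrite Hi. unfold minus, plus, opp; simpl. assert (0 < exp (1/2) * exp c).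
    apply Rmult_lt_0_compat; apply exp_pos. lra.
Qed.

Lemma Eg_chasles c d e : RInt Eg c d + RInt Eg d e = RInt Eg c e.
Proof. apply (RInt_Chasles Eg); apply Eg_ex. Qed.

Lemma Eg_int_nonneg c d : c <= d -> 0 <= RInt Eg c d.
Proof. intros; apply RInt_ge_0; auto. apply Eg_ex. intros; left; apply Eg_pos. Qed.

Lemma Eg_swap c d : RInt Eg c d = - RInt Eg d c.
Proof. rewrite <- (opp_RInt_swap Eg d c). reflexivity. apply Eg_ex. Qed.

Definition gauss_prop (a l : R) : Prop :=
  (forall c, c <= a -> RInt Eg c a <= l) /\
  (forall eps, eps > 0 -> exists M, forall c, c < - M -> Rabs (RInt Eg c a - l) < eps).

Lemma gauss_lim a : exists l, gauss_prop a l.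
Proof.
  destruct (mono_lim (fun y => RInt Eg (-y) a) (-a) (exp (1/2) * exp a)) as [l [H1 [H2 H3]]].
  - intros x y Hxy. rewrite <- (Eg_chasles (-y) (-x) a).
    assert (0 <= RInt Eg (-y) (-x)) by (apply Eg_int_nonneg; lra). lra.
  - intros x Hx. apply Eg_int_bound. lra.
  - exists l. split.
    + intros c Hc. specialize (H1 (-c)). rewrite Ropp_involutive in H1. apply H1. lra.
    + intros eps He. destruct (H3 eps He) as [M [HM1 HM2]]. exists M.
      intros c Hc. specialize (HM2 (-c)). rewrite Ropp_involutive in HM2. apply HM2. lra.
Qed.

Lemma gauss_prop_half a l : 0 <= a -> gauss_prop a l -> 1/2 <= l.
Proof.
  intros Ha [H1 _].
  specialize (H1 (-1) ltac:(lra)).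
  rewrite <- (Eg_chasles (-1) 0 a) in H1.
  assert (0 <= RInt Eg 0 a) by (apply Eg_int_nonneg; lra).
  assert (exp (-1/2) * (0 - -1) <= RInt Eg (-1) 0).
  { assert (Hc: RInt (fun _ => exp (-1/2)) (-1) 0 = exp(-1/2) * (0 - -1)).
    { rewrite (RInt_const (V:=R_CompleteNormedModule)). unfold scal; simpl; unfold mult; simpl; ring. }
    rewrite <- Hc.
    apply RInt_le; try lra. apply ex_RInt_const. apply Eg_ex.
    intros x Hx. unfold Eg. apply exp_le_inc. nra. }
  assert (exp (1/2) < 2).
  { assert (exp (1/2) * exp (1/2) <= 3).
    { rewrite <- exp_plus. replace (1/2 + 1/2) with 1 by lra. apply exp_le_3. }
    assert (0 < exp (1/2)) by apply exp_pos. nra. }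
  assert (exp (-1/2) * exp (1/2) = 1).
  { rewrite <- exp_plus. replace (-1/2 + 1/2) with 0 by lra. apply exp_0. }
  assert (0 < exp (-1/2)) by apply exp_pos.
  nra.
Qed.

Lemma minf_unique f a l1 l2 : improper_int_minf f a l1 -> improper_int_minf f a l2 -> l1 = l2.
Proof.
  intros H1 H2.
  apply Rminus_diag_uniq. apply Rabs_eq_0.
  apply Rle_antisym; [|apply Rabs_pos].
  apply Rnot_lt_le. intros Hlt.
  set (e := Rabs (l1 - l2) / 2).
  destruct (H1 e ltac:(unfold e; lra)) as [M1 HM1].
  destruct (H2 e ltac:(unfold e; lra)) as [M2 HM2].
  set (c := - Rmax M1 M2 - 1).
  destruct (HM1 c) as [p1 Hp1]. { unfold c. assert (M1 <= Rmax M1 M2) by apply Rmax_l. lra. }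
  destruct (HM2 c) as [p2 Hp2]. { unfold c. assert (M2 <= Rmax M1 M2) by apply Rmax_r. lra. }
  rewrite (RiemannInt_P5 p1 p2) in Hp1.
  assert (Rabs (l1 - l2) <= Rabs (RiemannInt p2 - l2) + Rabs (RiemannInt p2 - l1)).
  { replace (l1 - l2) with ((RiemannInt p2 - l2) - (RiemannInt p2 - l1)) by ring.
    eapply Rle_trans; [apply Rabs_triang|]. rewrite Rabs_Ropp. lra. }
  unfold e in *. lra.
Qed.

Lemma sqrt2pi_pos : 0 < sqrt (2 * PI).
Proof. apply sqrt_lt_R0. assert (0 < PI) by apply PI_RGT_0. lra. Qed.

Lemma RInt_phi c a : RInt phi c a = RInt Eg c a / sqrt (2 * PI).
Proof.
  rewrite (RInt_ext phi (fun x => scal (/ sqrt (2*PI)) (Eg x))).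
  - rewrite (RInt_scal (V:=R_CompleteNormedModule)). unfold scal; simpl; unfold mult; simpl. unfold Rdiv. ring.
    apply Eg_ex.
  - intros x _. unfold scal; simpl; unfold mult; simpl. unfold phi, Eg, Rdiv. ring.
Qed.

Lemma Phi_val a l : gauss_prop a l -> Phi a = l / sqrt (2 * PI).
Proof.
  intros [H1 H2].
  assert (Hs := sqrt2pi_pos).
  assert (Hp : improper_int_minf phi a (l / sqrt (2 * PI))).
  { intros eps He. destruct (H2 (eps * sqrt (2*PI))) as [M HM].
    { apply Rmult_lt_0_compat; lra. }
    exists (Rmax M (-a)). intros c Hc.
    assert (Hca : c <= a). { assert (-a <= Rmax M (-a)) by apply Rmax_r. lra. }
    assert (pr : Riemann_integrable phi c a).
    { apply continuity_implies_RiemannInt; auto. intros x _.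
      apply continuity_pt_filterlim. unfold phi.
      apply (@ex_derive_continuous R_AbsRing R_NormedModule (fun x => exp (- (x ^ 2) / 2) / sqrt (2 * PI))).
      auto_derive. lra. }
    exists pr. rewrite <- RInt_Reals, RInt_phi.
    specialize (HM c ltac:(assert (M <= Rmax M (-a)) by apply Rmax_l; lra)).
    replace (RInt Eg c a / sqrt (2 * PI) - l / sqrt (2 * PI)) with
      ((RInt Eg c a - l) / sqrt (2*PI)) by (field; lra).
    unfold Rdiv. rewrite Rabs_mult, Rabs_inv, (Rabs_pos_eq (sqrt _)) by lra.
    apply (Rmult_lt_reg_r (sqrt (2*PI))); auto.
    rewrite Rmult_assoc, Rinv_l by lra. lra. }
  apply (minf_unique phi a). 2: exact Hp.
  unfold Phi. apply epsilon_spec. exists (l / sqrt (2 * PI)); exact Hp.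
Qed.

Lemma cont_of_der f x l : is_derive f x l -> continuity_pt f x.
Proof.
  intros H. apply continuity_pt_filterlim.
  apply (@ex_derive_continuous R_AbsRing R_NormedModule). exists l; exact H.
Qed.

Definition h (x : R) : R := x - 1 - ln x.

Lemma ln_le_xm1 x : 0 < x -> ln x <= x - 1.
Proof. intros Hx. assert (H := exp_ineq1_le (ln x)). rewrite exp_ln in H; lra. Qed.

Lemma h_nonneg x : 0 < x -> 0 <= h x.
Proof. intros Hx. unfold h. assert (H := ln_le_xm1 x Hx). lra. Qed.

Lemma h_pos x : 0 < x -> x <> 1 -> 0 < h x.
Proof.
  intros Hx H1. unfold h.
  assert (Hn : ln x <> 0). { intros H0. apply H1. rewrite <- (exp_ln x Hx), H0. apply exp_0. }
  assert (H := exp_ineq1 (ln x) Hn). rewrite exp_ln in H; lra.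
Qed.

Lemma L1a u : 0 <= u -> u * u / (2 * (1 + u)) <= u - ln (1 + u).
Proof.
  intros Hu.
  assert (H := incr_mvt (fun v => v - ln (1 + v) - v * v / (2 * (1 + v)))
     (fun v => v * v / (2 * ((1 + v) * (1 + v)))) 0 u Hu).
  simpl in H.
  replace (0 - ln (1 + 0) - 0 * 0 / (2 * (1 + 0))) with 0 in H.
  2: { replace (1+0) with 1 by ring. rewrite ln_1. field. }
  assert (0 <= u - ln (1 + u) - u * u / (2 * (1 + u))); [|lra].
  apply H.
  - intros x Hx. auto_derive. lra. field. lra.
  - intros x Hx. apply Rmult_le_pos. nra. left. apply Rinv_0_lt_compat. nra.
  - intros x Hx. eapply cont_of_der. auto_derive. lra. reflexivity.
Qed.

Lemma L1b u : 0 <= u -> u - ln (1 + u) <= u * u / 2.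
Proof.
  intros Hu.
  assert (H := incr_mvt (fun v => v * v / 2 - v + ln (1 + v))
     (fun v => v * v / (1 + v)) 0 u Hu).
  simpl in H.
  replace (0 * 0 / 2 - 0 + ln (1 + 0)) with 0 in H.
  2: { replace (1+0) with 1 by ring. rewrite ln_1. field. }
  assert (0 <= u * u / 2 - u + ln (1 + u)); [|lra].
  apply H.
  - intros x Hx. auto_derive. lra. field. lra.
  - intros x Hx. apply Rmult_le_pos. nra. left. apply Rinv_0_lt_compat. nra.
  - intros x Hx. eapply cont_of_der. auto_derive. lra. reflexivity.
Qed.

Lemma L2a v : 0 <= v < 1 -> v * v / 2 <= - v - ln (1 - v).
Proof.
  intros Hv.
  assert (H := incr_mvt (fun w => - w - ln (1 - w) - w * w / 2)
     (fun w => w * w / (1 - w)) 0 v ltac:(lra)).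
  simpl in H.
  replace (- 0 - ln (1 - 0) - 0 * 0 / 2) with 0 in H.
  2: { replace (1-0) with 1 by ring. rewrite ln_1. field. }
  assert (0 <= - v - ln (1 - v) - v * v / 2); [|lra].
  apply H.
  - intros x Hx. auto_derive. lra. field. lra.
  - intros x Hx. apply Rmult_le_pos. nra. left. apply Rinv_0_lt_compat. nra.
  - intros x Hx. eapply cont_of_der. auto_derive. lra. reflexivity.
Qed.

Lemma L2b v : 0 <= v < 1 -> - v - ln (1 - v) <= v * v / (2 * (1 - v)).
Proof.
  intros Hv.
  assert (H := incr_mvt (fun w => w * w / (2 * (1 - w)) + w + ln (1 - w))
     (fun w => w * w / (2 * ((1 - w) * (1 - w)))) 0 v ltac:(lra)).
  simpl in H.
  replace (0 * 0 / (2 * (1 - 0)) + 0 + ln (1 - 0)) with 0 in H.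
  2: { replace (1-0) with 1 by ring. rewrite ln_1. field. }
  assert (0 <= v * v / (2 * (1 - v)) + v + ln (1 - v)); [|lra].
  apply H.
  - intros x Hx. auto_derive. lra. field. lra.
  - intros x Hx. apply Rmult_le_pos. nra. left. apply Rinv_0_lt_compat. nra.
  - intros x Hx. eapply cont_of_der. auto_derive. lra. reflexivity.
Qed.

Lemma sq_le P Q : 0 <= Q -> P * P <= Q * Q -> P <= Q.
Proof.
  intros HQ H. destruct (Rle_dec P Q) as [|Hn]; auto.
  exfalso. apply Rnot_le_lt in Hn. nra.
Qed.

Lemma core_ineq x : 0 < x ->
  Rabs (sqrt (2 * h x) - Rabs (x - 1)) <= Rabs (x - 1) * sqrt (2 * h x).
Proof.
  intros Hx.
  assert (Hh := h_nonneg x Hx).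
  set (S := sqrt (2 * h x)). set (U := Rabs (x - 1)).
  assert (HS : 0 <= S) by apply sqrt_pos.
  assert (HS2 : S * S = 2 * h x) by (apply sqrt_sqrt; lra).
  assert (HU : 0 <= U) by apply Rabs_pos.
  assert (HA : U * U <= 2 * h x * ((1 + U) * (1 + U))).
  { unfold U, h. destruct (Rle_dec 1 x).
    - rewrite Rabs_pos_eq by lra.
      assert (H := L1a (x - 1) ltac:(lra)). replace (1 + (x - 1)) with x in H by ring.
      assert (Hd : (x - 1) * (x - 1) / (2 * x) * (2 * (x * x)) = (x-1)*(x-1) * x)
        by (field; lra).
      replace (1 + (x - 1)) with x by ring.
      assert ((x - 1) * (x - 1) / (2 * x) * (2 * (x * x)) <= (x - 1 - ln x) * (2 * (x * x))).
      { apply Rmult_le_compat_r; nra. }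
      assert (0 <= (x-1)*(x-1)*(x-1)) by (apply Rmult_le_pos; [nra|lra]).
      nra.
    - rewrite Rabs_left by lra.
      assert (H := L2a (1 - x) ltac:(lra)). replace (1 - (1 - x)) with x in H by ring.
      assert (0 <= (1 - x) * (1 - x)) by nra.
      replace (- (x - 1)) with (1 - x) by ring.
      assert ((1 - x) * (1 - x) <= 2 * (x - 1 - ln x)) by lra.
      assert (1 <= (1 + (1 - x)) * (1 + (1 - x))) by nra.
      nra. }
  assert (HB : U < 1 -> 2 * h x * ((1 - U) * (1 - U)) <= U * U).
  { intros HU1. unfold U, h in *. destruct (Rle_dec 1 x).
    - rewrite Rabs_pos_eq in * by lra.
      assert (H := L1b (x - 1) ltac:(lra)). replace (1 + (x - 1)) with x in H by ring.
      assert ((1 - (x - 1)) * (1 - (x - 1)) <= 1) by nra.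
      assert (0 <= x - 1 - ln x) by (apply (h_nonneg x Hx)).
      nra.
    - rewrite Rabs_left in * by lra.
      replace (- (x - 1)) with (1 - x) in * by ring.
      assert (H := L2b (1 - x) ltac:(lra)). replace (1 - (1 - x)) with x in H by ring.
      assert (Hd : (1 - x) * (1 - x) / (2 * x) * (2 * (x * x)) = (1-x)*(1-x) * x)
        by (field; lra).
      assert ((x - 1 - ln x) * (2 * (x * x)) <= (1 - x) * (1 - x) / (2 * x) * (2 * (x * x))).
      { apply Rmult_le_compat_r; nra. }
      assert (0 <= (1-x)*(1-x)*(1-x)) by (apply Rmult_le_pos; [nra|lra]).
      nra. }
  assert (U <= S * (1 + U)).
  { apply sq_le. nra. rewrite <- HS2 in HA. nra. }
  assert (S - U <= U * S).
  { destruct (Rlt_dec U 1) as [HU1|HU1].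
    - assert (S * (1 - U) <= U); [|nra].
      apply sq_le; auto. rewrite <- HS2 in HB. specialize (HB HU1). nra.
    - nra. }
  apply Rabs_le. lra.
Qed.


Definition kk (lam n t : R) := - lam * t + n * ln (1 + t).
Definition ks (lam n : R) := lam - n - n * ln (lam / n).
Definition ts (lam n : R) := n / lam - 1.
Definition gg (lam n t : R) := exp (kk lam n t).
Definition ferl (lam n : R) := fun t => t * exp (- lam * t) * Rpower (1 + t) (n - 1).
Definition Ii (lam n b : R) := RInt (ferl lam n) 0 b.
Definition Wp (lam n t : R) := sqrt (2 * (ks lam n - kk lam n t)).
Definition gam (lam n : R) := (n - lam) / sqrt n.
Definition aa (lam n : R) := sqrt (2 * ks lam n).
Definition Psm (lam n t : R) :=
  1 - gg lam n t + gam lam n * exp (ks lam n) * RInt Eg (Wp lam n t) (aa lam n).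
Definition Psp (lam n t : R) :=
  1 - gg lam n t + gam lam n * exp (ks lam n) * RInt Eg (- Wp lam n t) (aa lam n).

Lemma ks_kk lam n t : 0 < lam < n -> -1 < t ->
  ks lam n - kk lam n t = n * h (lam / n * (1 + t)).
Proof.
  intros Hl Ht. unfold ks, kk, h.
  rewrite ln_mult; [|apply Rdiv_lt_0_compat; lra|lra].
  field. lra.
Qed.

Lemma rho_pos lam n : 0 < lam < n -> 0 < lam / n.
Proof. intros; apply Rdiv_lt_0_compat; lra. Qed.

Lemma ks_kk_nonneg lam n t : 0 < lam < n -> -1 < t -> 0 <= ks lam n - kk lam n t.
Proof.
  intros Hl Ht. rewrite ks_kk by auto. apply Rmult_le_pos; [lra|].
  apply h_nonneg. apply Rmult_lt_0_compat; [apply rho_pos|]; lra.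
Qed.

Lemma ks_kk_pos lam n t : 0 < lam < n -> -1 < t -> t <> ts lam n -> 0 < ks lam n - kk lam n t.
Proof.
  intros Hl Ht Hts. rewrite ks_kk by auto. apply Rmult_lt_0_compat; [lra|].
  apply h_pos. apply Rmult_lt_0_compat; [apply rho_pos|]; lra.
  intros H. apply Hts. unfold ts. apply (Rmult_eq_compat_l (n/lam)) in H.
  replace (n / lam * (lam / n * (1 + t))) with (1 + t) in H by (field; lra). lra.
Qed.

Lemma kk0 lam n : kk lam n 0 = 0.
Proof. unfold kk. replace (1+0) with 1 by ring. rewrite ln_1. ring. Qed.

Lemma kk_ts lam n : 0 < lam < n -> kk lam n (ts lam n) = ks lam n.
Proof.
  intros Hl. unfold kk, ks, ts. replace (1 + (n / lam - 1)) with (/ (lam / n)) by (field; lra).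
  rewrite ln_Rinv by (apply rho_pos; auto). field. lra.
Qed.

Lemma ks_nonneg lam n : 0 < lam < n -> 0 <= ks lam n.
Proof.
  intros Hl. assert (H := ks_kk_nonneg lam n 0 Hl ltac:(lra)). rewrite kk0 in H. lra.
Qed.

Lemma ts_pos lam n : 0 < lam < n -> 0 < ts lam n.
Proof.
  intros Hl. unfold ts. assert (1 < n / lam). { apply (Rmult_lt_reg_r lam); [lra|].
  unfold Rdiv. rewrite Rmult_assoc, Rinv_l; lra. } lra.
Qed.

Lemma gg_le lam n t : 0 < lam < n -> -1 < t -> gg lam n t <= exp (ks lam n).
Proof.
  intros Hl Ht. unfold gg. apply exp_le_inc. assert (H := ks_kk_nonneg lam n t Hl Ht). lra.
Qed.

Lemma ferl_eq lam n t : -1 < t -> ferl lam n t = t * gg lam n t / (1 + t).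
Proof.
  intros Ht. unfold ferl, gg, kk, Rpower.
  replace (- lam * t + n * ln (1 + t)) with ((- lam * t + (n - 1) * ln (1 + t)) + ln (1 + t)) by ring.
  rewrite (exp_plus _ (ln (1+t))), exp_ln by lra. rewrite exp_plus. field. lra.
Qed.

Lemma Eg_Wp lam n t : 0 < lam < n -> -1 < t ->
  Eg (Wp lam n t) * exp (ks lam n) = gg lam n t.
Proof.
  intros Hl Ht. unfold Eg, Wp, gg.
  rewrite <- exp_plus. f_equal.
  assert (H := ks_kk_nonneg lam n t Hl Ht).
  rewrite pow2_sqrt by lra. field.
Qed.

Lemma Eg_even z : Eg (- z) = Eg z.
Proof. unfold Eg. replace ((-z)^2) with (z^2) by ring. reflexivity. Qed.

Lemma aa_eq lam n : 0 < lam < n -> aa lam n = Wp lam n 0.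
Proof. intros. unfold aa, Wp. rewrite kk0. f_equal. ring. Qed.

Lemma Wp_ts lam n : 0 < lam < n -> Wp lam n (ts lam n) = 0.
Proof. intros. unfold Wp. rewrite kk_ts by auto. replace (2 * (ks lam n - ks lam n)) with 0 by ring. apply sqrt_0. Qed.

Lemma ball_R (b : R) (eps : posreal) y : ball b eps y -> Rabs (y - b) < eps.
Proof. intros H. exact H. Qed.

Lemma ferl_der lam n t : -1 < t -> ex_derive (ferl lam n) t.
Proof. intros Ht. unfold ferl, Rpower. auto_derive. lra. Qed.

Lemma ferl_cont lam n t : -1 < t -> continuous (ferl lam n) t.
Proof. intros Ht. apply (@ex_derive_continuous R_AbsRing R_NormedModule), ferl_der; auto. Qed.

Lemma ferl_ex lam n c d : -1 < c -> -1 < d -> ex_RInt (ferl lam n) c d.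
Proof.
  intros Hc Hd. apply (@ex_RInt_continuous R_CompleteNormedModule).
  intros z Hz. apply ferl_cont.
  assert (Rmin c d > -1) by (apply Rmin_glb_lt; lra). lra.
Qed.

Lemma Ii_der lam n b : -1 < b -> is_derive (Ii lam n) b (ferl lam n b).
Proof.
  intros Hb. apply (is_derive_RInt (ferl lam n) (Ii lam n) 0 b).
  - assert (He : 0 < (1 + b) / 2) by lra.
    exists (mkposreal _ He). intros y Hy. apply ball_R in Hy. simpl in Hy.
    apply Rabs_lt_between in Hy.
    unfold Ii. apply (RInt_correct (V:=R_CompleteNormedModule)). apply ferl_ex; lra.
  - apply ferl_cont; auto.
Qed.

Lemma Fint_der a c : is_derive (fun c => RInt Eg c a) c (- Eg c).
Proof.
  apply (is_derive_RInt' Eg (fun c => RInt Eg c a) c a).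
  - exists (mkposreal 1 Rlt_0_1). intros y _.
    apply (RInt_correct (V:=R_CompleteNormedModule)). apply Eg_ex.
  - apply Eg_cont.
Qed.

Definition kd (lam n t : R) := - lam + n / (1 + t).

Lemma gg_der lam n t : -1 < t -> is_derive (gg lam n) t (kd lam n t * gg lam n t).
Proof.
  intros Ht. unfold gg, kk, kd. auto_derive. lra. field. lra.
Qed.

Lemma Wp_der lam n t : 0 < lam < n -> -1 < t -> t <> ts lam n ->
  is_derive (Wp lam n) t (- kd lam n t / Wp lam n t).
Proof.
  intros Hl Ht Hts. assert (Hp := ks_kk_pos lam n t Hl Ht Hts).
  assert (Hs : 0 < sqrt (2 * (ks lam n - kk lam n t))) by (apply sqrt_lt_R0; lra).
  unfold Wp, kd. unfold ks, kk in *. auto_derive.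
  - split; [lra|]. split; auto. lra.
  - unfold Rminus in *. field. split; lra.
Qed.

Lemma Wp_cont lam n t : -1 < t -> continuity_pt (Wp lam n) t.
Proof.
  intros Ht. apply continuity_pt_filterlim. unfold Wp.
  apply (continuous_sqrt_comp (fun t => 2 * (ks lam n - kk lam n t))). apply (@ex_derive_continuous R_AbsRing R_NormedModule).
  unfold ks, kk. auto_derive. lra.
Qed.

Lemma key0 lam n t : 0 < lam < n -> -1 < t -> t <> ts lam n ->
  Rabs ((n - lam) / (1 + t) - gam lam n * Rabs (kd lam n t) / Wp lam n t)
    <= gam lam n / sqrt n * Rabs (kd lam n t).
Proof.
  intros Hl Ht Hts.
  set (x := lam / n * (1 + t)).
  assert (Hx : 0 < x) by (unfold x; apply Rmult_lt_0_compat; [apply rho_pos|]; lra).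
  assert (Hpos := ks_kk_pos lam n t Hl Ht Hts).
  rewrite ks_kk in Hpos by auto. fold x in Hpos.
  assert (Hhx : 0 < h x) by (apply Rmult_lt_reg_l with n; lra).
  set (S := sqrt (2 * h x)).
  assert (HS : 0 < S) by (apply sqrt_lt_R0; lra).
  assert (Hsn : 0 < sqrt n) by (apply sqrt_lt_R0; lra).
  assert (Hsn2 : sqrt n * sqrt n = n) by (apply sqrt_sqrt; lra).
  assert (Hsq : sqrt n ^ 2 = n) by (rewrite pow2_sqrt; lra).
  assert (HW : Wp lam n t = sqrt n * S).
  { unfold Wp, S. rewrite ks_kk by auto. fold x. rewrite <- sqrt_mult by lra. f_equal. ring. }
  set (U := Rabs (x - 1)).
  assert (HU : 0 <= U) by apply Rabs_pos.
  assert (Hkd : Rabs (kd lam n t) = n / (1 + t) * U).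
  { unfold kd, U. replace (- lam + n / (1 + t)) with (n / (1 + t) * (- (x - 1))).
    2: { unfold x. field. lra. }
    rewrite Rabs_mult, Rabs_Ropp, (Rabs_pos_eq (n / (1+t))). reflexivity.
    apply Rlt_le, Rdiv_lt_0_compat; lra. }
  assert (Hc := core_ineq x Hx). fold S U in Hc.
  rewrite Hkd, HW. unfold gam.
  replace ((n - lam) / (1 + t) - (n - lam) / sqrt n * (n / (1 + t) * U) / (sqrt n * S))
    with ((n - lam) / (1 + t) * ((S - U) / S)).
  2: { field_simplify; try lra. rewrite Hsq. field. assert (0 < S*(1+t)) by (apply Rmult_lt_0_compat; lra).
    assert (0 < S*(1+t)*n) by (apply Rmult_lt_0_compat; lra). repeat split; lra. }
  replace ((n - lam) / sqrt n / sqrt n * (n / (1 + t) * U)) with ((n - lam) / (1 + t) * U).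
  2: { field_simplify; try lra. rewrite Hsq. field. assert (0 < S*(1+t)) by (apply Rmult_lt_0_compat; lra).
    assert (0 < S*(1+t)*n) by (apply Rmult_lt_0_compat; lra). assert (0 < (1+t)*n) by (apply Rmult_lt_0_compat; lra). repeat split; lra. }
  rewrite Rabs_mult, (Rabs_pos_eq ((n - lam) / (1 + t))).
  2: { apply Rlt_le, Rdiv_lt_0_compat; lra. }
  apply Rmult_le_compat_l. { apply Rlt_le, Rdiv_lt_0_compat; lra. }
  unfold Rdiv. rewrite Rabs_mult, Rabs_inv, (Rabs_pos_eq S) by lra.
  apply (Rmult_le_reg_r S); auto. rewrite Rmult_assoc, Rinv_l by lra. lra.
Qed.

Lemma der_combo (f1 f2 f3 : R -> R) d1 d2 d3 t lam C :
  is_derive f1 t d1 -> is_derive f2 t d2 -> is_derive f3 t d3 ->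
  is_derive (fun t => lam * f1 t - (1 - f2 t + C * f3 t)) t (lam * d1 - (- d2 + C * d3)).
Proof.
  intros H1 H2 H3.
  replace (lam * d1 - (- d2 + C * d3)) with (minus (scal lam d1) (plus (minus zero d2) (scal C d3))).
  2: { unfold minus, plus, opp, zero, scal; simpl; unfold mult; simpl; ring. }
  { apply (is_derive_minus (fun t => lam * f1 t) (fun t => 1 - f2 t + C * f3 t)).
    apply (is_derive_scal f1). exact H1.
    apply (is_derive_plus (fun t => 1 - f2 t) (fun t => C * f3 t)).
    apply (is_derive_minus (fun _ => 1) f2). apply is_derive_const. exact H2.
    apply (is_derive_scal f3). exact H3. }
Qed.

Lemma cont_combo (f1 f2 f3 : R -> R) t lam C :
  continuity_pt f1 t -> continuity_pt f2 t -> continuity_pt f3 t ->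
  continuity_pt (fun t => lam * f1 t - (1 - f2 t + C * f3 t)) t.
Proof.
  intros H1 H2 H3.
  apply (continuity_pt_minus (fun t => lam * f1 t) (fun t => 1 - f2 t + C * f3 t)).
  apply (continuity_pt_scal f1); auto.
  apply (continuity_pt_plus (fun t => 1 - f2 t) (fun t => C * f3 t)).
  apply (continuity_pt_minus (fun _ => 1) f2); auto. apply continuity_pt_const. intros x y; reflexivity.
  apply (continuity_pt_scal f3); auto.
Qed.

Definition Dm (lam n t : R) := lam * Ii lam n t - Psm lam n t.
Definition Dp (lam n t : R) := lam * Ii lam n t - Psp lam n t.

Lemma Fint_cont a c : continuity_pt (fun c => RInt Eg c a) c.
Proof. eapply cont_of_der. apply Fint_der. Qed.

Lemma Dm_cont lam n t : -1 < t -> continuity_pt (Dm lam n) t.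
Proof.
  intros Ht. unfold Dm, Psm.
  apply (cont_combo (Ii lam n) (gg lam n) (fun t => RInt Eg (Wp lam n t) (aa lam n))).
  - eapply cont_of_der, Ii_der; auto.
  - eapply cont_of_der, gg_der; auto.
  - apply (continuity_pt_comp (Wp lam n) (fun c => RInt Eg c (aa lam n))).
    apply Wp_cont; auto. apply Fint_cont.
Qed.

Lemma Dp_cont lam n t : -1 < t -> continuity_pt (Dp lam n) t.
Proof.
  intros Ht. unfold Dp, Psp.
  apply (cont_combo (Ii lam n) (gg lam n) (fun t => RInt Eg (- Wp lam n t) (aa lam n))).
  - eapply cont_of_der, Ii_der; auto.
  - eapply cont_of_der, gg_der; auto.
  - apply (continuity_pt_comp (fun t => - Wp lam n t) (fun c => RInt Eg c (aa lam n))).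
    apply continuity_pt_opp, Wp_cont; auto. apply Fint_cont.
Qed.

Lemma Dm_der lam n t : 0 < lam < n -> -1 < t -> t <> ts lam n ->
  is_derive (Dm lam n) t
    (gg lam n t * ((n - lam) / (1 + t) - gam lam n * kd lam n t / Wp lam n t)).
Proof.
  intros Hl Ht Hts.
  assert (HW : 0 < Wp lam n t) by (apply sqrt_lt_R0; assert (H := ks_kk_pos lam n t Hl Ht Hts); lra).
  assert (H3 : is_derive (fun t => RInt Eg (Wp lam n t) (aa lam n)) t
                 (scal (- kd lam n t / Wp lam n t) (- Eg (Wp lam n t)))).
  { apply (is_derive_comp (fun c => RInt Eg c (aa lam n)) (Wp lam n)).
    apply Fint_der. apply Wp_der; auto. }
  assert (H := der_combo _ _ _ _ _ _ t lam (gam lam n * exp (ks lam n))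
      (Ii_der lam n t Ht) (gg_der lam n t Ht) H3).
  unfold Dm, Psm.
  match type of H with is_derive _ _ ?v => replace (gg lam n t * ((n - lam) / (1 + t) - gam lam n * kd lam n t / Wp lam n t)) with v; [exact H|] end.
  unfold scal; simpl; unfold mult; simpl. rewrite ferl_eq by auto.
  assert (HE := Eg_Wp lam n t Hl Ht).
  assert (Hk : 0 < exp (ks lam n)) by apply exp_pos.
  replace (Eg (Wp lam n t)) with (gg lam n t / exp (ks lam n)) by (rewrite <- HE; field; lra).
  unfold kd. field. repeat split; lra.
Qed.

Lemma Dp_der lam n t : 0 < lam < n -> -1 < t -> t <> ts lam n ->
  is_derive (Dp lam n) t
    (gg lam n t * ((n - lam) / (1 + t) + gam lam n * kd lam n t / Wp lam n t)).
Proof.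
  intros Hl Ht Hts.
  assert (HW : 0 < Wp lam n t) by (apply sqrt_lt_R0; assert (H := ks_kk_pos lam n t Hl Ht Hts); lra).
  assert (H3 : is_derive (fun t => RInt Eg (- Wp lam n t) (aa lam n)) t
                 (scal (opp (- kd lam n t / Wp lam n t)) (- Eg (- Wp lam n t)))).
  { apply (is_derive_comp (fun c => RInt Eg c (aa lam n)) (fun t => - Wp lam n t)).
    apply Fint_der. apply (is_derive_opp (Wp lam n)). apply Wp_der; auto. }
  assert (H := der_combo _ _ _ _ _ _ t lam (gam lam n * exp (ks lam n))
      (Ii_der lam n t Ht) (gg_der lam n t Ht) H3).
  unfold Dp, Psp.
  match type of H with is_derive _ _ ?v => replace (gg lam n t * ((n - lam) / (1 + t) + gam lam n * kd lam n t / Wp lam n t)) with v; [exact H|] end.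
  unfold scal, opp; simpl; unfold mult; simpl. rewrite ferl_eq by auto. rewrite Eg_even.
  assert (HE := Eg_Wp lam n t Hl Ht).
  assert (Hk : 0 < exp (ks lam n)) by apply exp_pos.
  replace (Eg (Wp lam n t)) with (gg lam n t / exp (ks lam n)) by (rewrite <- HE; field; lra).
  unfold kd. field. repeat split; lra.
Qed.

Lemma kd_pos lam n t : 0 < lam < n -> -1 < t < ts lam n -> 0 < kd lam n t.
Proof.
  intros Hl Ht. unfold kd, ts in *.
  assert (lam * (1 + t) < n).
  { assert (1 + t < n / lam) by lra. apply (Rmult_lt_compat_l lam) in H; [|lra].
    replace (lam * (n / lam)) with n in H by (field; lra). lra. }
  assert (lam < n / (1 + t)). { apply (Rmult_lt_reg_r (1 + t)); [lra|].
    replace (n / (1 + t) * (1 + t)) with n by (field; lra). lra. }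
  lra.
Qed.

Lemma kd_neg lam n t : 0 < lam < n -> ts lam n < t -> kd lam n t < 0.
Proof.
  intros Hl Ht. assert (Hts := ts_pos lam n Hl). unfold kd, ts in *.
  assert (n < lam * (1 + t)).
  { assert (n / lam < 1 + t) by lra. apply (Rmult_lt_compat_l lam) in H; [|lra].
    replace (lam * (n / lam)) with n in H by (field; lra). lra. }
  assert (n / (1 + t) < lam). { apply (Rmult_lt_reg_r (1 + t)); [lra|].
    replace (n / (1 + t) * (1 + t)) with n by (field; lra). lra. }
  lra.
Qed.

Lemma gam_nonneg lam n : 0 < lam < n -> 0 <= gam lam n / sqrt n.
Proof.
  intros Hl. assert (0 < sqrt n) by (apply sqrt_lt_R0; lra).
  unfold gam. apply Rlt_le. apply Rdiv_lt_0_compat; auto. apply Rdiv_lt_0_compat; lra.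
Qed.

Lemma gg0 lam n : gg lam n 0 = 1.
Proof. unfold gg. rewrite kk0. apply exp_0. Qed.

Lemma gg_pos lam n t : 0 < gg lam n t.
Proof. apply exp_pos. Qed.

Lemma Dm_zero lam n : 0 < lam < n -> Dm lam n 0 = 0.
Proof.
  intros Hl. unfold Dm, Psm, Ii. rewrite <- aa_eq by auto.
  rewrite (RInt_point (V:=R_CompleteNormedModule)). rewrite (RInt_point (V:=R_CompleteNormedModule)).
  rewrite gg0. unfold zero; simpl. ring.
Qed.

Lemma Dm_Dp_ts lam n : 0 < lam < n -> Dm lam n (ts lam n) = Dp lam n (ts lam n).
Proof.
  intros Hl. unfold Dm, Dp, Psm, Psp. rewrite Wp_ts by auto. rewrite Ropp_0. reflexivity.
Qed.

Lemma Dm_bound lam n b : 0 < lam < n -> 0 <= b <= ts lam n ->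
  Rabs (Dm lam n b) <= gam lam n / sqrt n * (gg lam n b - 1).
Proof.
  intros Hl Hb.
  assert (Hg := gam_nonneg lam n Hl).
  assert (H := mvt_abs (Dm lam n) (fun t => gam lam n / sqrt n * gg lam n t)
    (fun t => gg lam n t * ((n - lam) / (1 + t) - gam lam n * kd lam n t / Wp lam n t))
    (fun t => gam lam n / sqrt n * (kd lam n t * gg lam n t)) 0 b ltac:(lra)).
  rewrite Dm_zero, gg0, Rminus_0_r in H by auto.
  replace (gam lam n / sqrt n * (gg lam n b - 1)) with
    (gam lam n / sqrt n * gg lam n b - gam lam n / sqrt n * 1) by ring.
  apply H.
  - intros x Hx. apply Dm_der; auto. lra. lra.
  - intros x Hx. apply (is_derive_scal (gg lam n)). apply gg_der. lra.
  - intros x Hx. assert (Hk := kd_pos lam n x Hl ltac:(lra)).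
    rewrite Rabs_mult, (Rabs_pos_eq (gg lam n x)) by (apply Rlt_le, gg_pos).
    assert (Hkey := key0 lam n x Hl ltac:(lra) ltac:(lra)).
    rewrite (Rabs_pos_eq (kd lam n x)) in Hkey by lra.
    assert (0 < gg lam n x) by apply gg_pos.
    replace (gam lam n / sqrt n * (kd lam n x * gg lam n x)) with
      (gg lam n x * (gam lam n / sqrt n * kd lam n x)) by ring.
    apply Rmult_le_compat_l; lra.
  - intros x Hx. apply Dm_cont. lra.
  - intros x Hx. apply (continuity_pt_scal (gg lam n)). eapply cont_of_der, gg_der. lra.
Qed.

Lemma Dp_bound lam n b : 0 < lam < n -> ts lam n <= b ->
  Rabs (Dp lam n b - Dp lam n (ts lam n)) <= gam lam n / sqrt n * (gg lam n (ts lam n) - gg lam n b).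
Proof.
  intros Hl Hb.
  assert (Hg := gam_nonneg lam n Hl). assert (Hts := ts_pos lam n Hl).
  assert (H := mvt_abs (Dp lam n) (fun t => - (gam lam n / sqrt n) * gg lam n t)
    (fun t => gg lam n t * ((n - lam) / (1 + t) + gam lam n * kd lam n t / Wp lam n t))
    (fun t => - (gam lam n / sqrt n) * (kd lam n t * gg lam n t)) (ts lam n) b Hb).
  replace (gam lam n / sqrt n * (gg lam n (ts lam n) - gg lam n b)) with
    (- (gam lam n / sqrt n) * gg lam n b - - (gam lam n / sqrt n) * gg lam n (ts lam n)) by ring.
  apply H.
  - intros x Hx. apply Dp_der; auto. lra. lra.
  - intros x Hx. apply (is_derive_scal (gg lam n)). apply gg_der. lra.
  - intros x Hx. assert (Hk := kd_neg lam n x Hl ltac:(lra)).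
    rewrite Rabs_mult, (Rabs_pos_eq (gg lam n x)) by (apply Rlt_le, gg_pos).
    assert (Hkey := key0 lam n x Hl ltac:(lra) ltac:(lra)).
    rewrite (Rabs_left (kd lam n x)) in Hkey by lra.
    replace ((n - lam) / (1 + x) - gam lam n * - kd lam n x / Wp lam n x) with
      ((n - lam) / (1 + x) + gam lam n * kd lam n x / Wp lam n x) in Hkey.
    2: { unfold Rdiv. ring. }
    assert (0 < gg lam n x) by apply gg_pos.
    replace (- (gam lam n / sqrt n) * (kd lam n x * gg lam n x)) with
      (gg lam n x * (gam lam n / sqrt n * - kd lam n x)) by ring.
    apply Rmult_le_compat_l; lra.
  - intros x Hx. apply Dp_cont. lra.
  - intros x Hx. apply (continuity_pt_scal (gg lam n)). eapply cont_of_der, gg_der. lra.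
Qed.

Lemma D_bound1 lam n b : 0 < lam < n -> 0 <= b <= ts lam n ->
  Rabs (lam * Ii lam n b - Psm lam n b) <= gam lam n / sqrt n * exp (ks lam n).
Proof.
  intros Hl Hb. assert (H := Dm_bound lam n b Hl Hb). unfold Dm in H.
  assert (Hg := gam_nonneg lam n Hl).
  assert (gg lam n b - 1 <= exp (ks lam n)) by (assert (H1 := gg_le lam n b Hl ltac:(lra)); lra).
  eapply Rle_trans; [exact H|]. apply Rmult_le_compat_l; auto.
Qed.

Lemma D_bound2 lam n b : 0 < lam < n -> ts lam n <= b ->
  Rabs (lam * Ii lam n b - Psp lam n b) <= 2 * (gam lam n / sqrt n * exp (ks lam n)).
Proof.
  intros Hl Hb. assert (Hts := ts_pos lam n Hl).
  assert (H1 := Dp_bound lam n b Hl Hb).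
  assert (H2 := D_bound1 lam n (ts lam n) Hl ltac:(lra)).
  fold (Dm lam n (ts lam n)) in H2. rewrite Dm_Dp_ts in H2 by auto.
  assert (Hg := gam_nonneg lam n Hl).
  assert (gg lam n (ts lam n) - gg lam n b <= exp (ks lam n)).
  { assert (H3 := gg_le lam n (ts lam n) Hl ltac:(lra)). assert (H4 := gg_pos lam n b). lra. }
  assert (gam lam n / sqrt n * (gg lam n (ts lam n) - gg lam n b) <= gam lam n / sqrt n * exp (ks lam n))
    by (apply Rmult_le_compat_l; auto).
  fold (Dp lam n b).
  replace (Dp lam n b) with ((Dp lam n b - Dp lam n (ts lam n)) + Dp lam n (ts lam n)) by ring.
  eapply Rle_trans; [apply Rabs_triang|]. lra.
Qed.

Lemma gam_nonneg' lam n : 0 < lam < n -> 0 <= gam lam n.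
Proof.
  intros Hl. assert (0 < sqrt n) by (apply sqrt_lt_R0; lra).
  unfold gam. apply Rlt_le. apply Rdiv_lt_0_compat; lra.
Qed.

Lemma aa_nonneg lam n : 0 <= aa lam n.
Proof. apply sqrt_pos. Qed.

Lemma RInt_Eg_le_l a l c : 0 <= a -> gauss_prop a l -> c <= 0 \/ c <= a -> RInt Eg c a <= l.
Proof.
  intros Ha Hp Hc. assert (Hl := gauss_prop_half a l Ha Hp).
  destruct (Rle_dec c a). apply (proj1 Hp); auto.
  rewrite Eg_swap. assert (0 <= RInt Eg a c) by (apply Eg_int_nonneg; lra). lra.
Qed.

Lemma ferl_nonneg lam n t : 0 <= t -> 0 <= ferl lam n t.
Proof.
  intros Ht. unfold ferl, Rpower. apply Rmult_le_pos. apply Rmult_le_pos; auto.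
  left; apply exp_pos. left; apply exp_pos.
Qed.

Lemma Ii_mono lam n x y : 0 <= x <= y -> Ii lam n x <= Ii lam n y.
Proof.
  intros Hxy. unfold Ii.
  rewrite <- (RInt_Chasles (V:=R_CompleteNormedModule) (ferl lam n) 0 x y).
  2,3: apply ferl_ex; lra.
  assert (0 <= RInt (ferl lam n) x y); [|unfold plus; simpl; lra].
  apply RInt_ge_0. lra. apply ferl_ex; lra. intros; apply ferl_nonneg; lra.
Qed.

Lemma Ii_upper lam n l b : 0 < lam < n -> gauss_prop (aa lam n) l -> 0 <= b ->
  lam * Ii lam n b <= 1 + gam lam n * exp (ks lam n) * l + 2 * (gam lam n / sqrt n * exp (ks lam n)).
Proof.
  intros Hlam Hp Hb.
  assert (HC : 0 <= gam lam n * exp (ks lam n)).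
  { apply Rmult_le_pos. apply gam_nonneg'; auto. left; apply exp_pos. }
  assert (Hg1 := gam_nonneg lam n Hlam).
  assert (He : 0 < exp (ks lam n)) by apply exp_pos.
  assert (Hg2 : 0 <= gam lam n / sqrt n * exp (ks lam n)) by (apply Rmult_le_pos; lra).
  assert (Hgg := gg_pos lam n b).
  destruct (Rle_dec b (ts lam n)).
  - assert (H := D_bound1 lam n b Hlam ltac:(lra)). apply Rabs_le_between in H.
    assert (RInt Eg (Wp lam n b) (aa lam n) <= l).
    { apply RInt_Eg_le_l; auto. apply aa_nonneg. right.
      unfold Wp, aa. apply sqrt_le_1_alt.
      assert (Hk : 0 <= kk lam n b).
      { (* kk is nondecreasing on [0, ts] *)
        assert (HH := incr_mvt (kk lam n) (kd lam n) 0 b ltac:(lra)).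
        rewrite kk0 in HH. apply HH.
        - intros x Hx. unfold kk, kd. auto_derive. lra. field. lra.
        - intros x Hx. left. apply kd_pos; auto. lra.
        - intros x Hx. eapply cont_of_der. unfold kk. auto_derive. lra. reflexivity. }
      lra. }
    unfold Psm in H.
    assert (gam lam n * exp (ks lam n) * RInt Eg (Wp lam n b) (aa lam n) <= gam lam n * exp (ks lam n) * l)
      by (apply Rmult_le_compat_l; auto).
    lra.
  - assert (H := D_bound2 lam n b Hlam ltac:(lra)). apply Rabs_le_between in H.
    assert (RInt Eg (- Wp lam n b) (aa lam n) <= l).
    { apply RInt_Eg_le_l; auto. apply aa_nonneg. left.
      assert (0 <= Wp lam n b) by apply sqrt_pos. lra. }
    unfold Psp in H.
    assert (gam lam n * exp (ks lam n) * RInt Eg (- Wp lam n b) (aa lam n) <= gam lam n * exp (ks lam n) * l)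
      by (apply Rmult_le_compat_l; auto).
    lra.
Qed.

Lemma big_b lam n K0 : 0 < lam < n -> 0 <= K0 -> exists b, ts lam n <= b /\ kk lam n b <= - K0.
Proof.
  intros Hl HK.
  set (s := Rmax 1 (Rmax ((2 * n + K0 + lam) / lam) (ts lam n + 1))).
  assert (Hs1 : 1 <= s) by apply Rmax_l.
  assert (Hs2 : (2 * n + K0 + lam) / lam <= s) by (eapply Rle_trans; [apply Rmax_l|apply Rmax_r]).
  assert (Hs3 : ts lam n + 1 <= s) by (eapply Rle_trans; [apply Rmax_r|apply Rmax_r]).
  exists (s * s - 1). split. nra.
  unfold kk. replace (1 + (s * s - 1)) with (s * s) by ring.
  rewrite ln_mult by lra.
  assert (Hln := ln_le_xm1 s ltac:(lra)).
  assert (Hls : 2 * n + K0 + lam <= lam * s).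
  { apply (Rmult_le_compat_l lam) in Hs2; [|lra].
    replace (lam * ((2 * n + K0 + lam) / lam)) with (2 * n + K0 + lam) in Hs2 by (field; lra). lra. }
  assert ((2 * n + K0 + lam) * s <= lam * s * s) by nra.
  assert (2 * n * s + K0 + lam <= (2 * n + K0 + lam) * s) by nra.
  nra.
Qed.

Lemma Psp_lower lam n l : 0 < lam < n -> gauss_prop (aa lam n) l ->
  forall eta, eta > 0 -> exists b, ts lam n <= b /\
    1 + gam lam n * exp (ks lam n) * l - eta <= Psp lam n b.
Proof.
  intros Hl Hp eta Heta.
  set (C := gam lam n * exp (ks lam n)).
  assert (HC : 0 <= C) by (apply Rmult_le_pos; [apply gam_nonneg'; auto|left; apply exp_pos]).
  destruct ((proj2 Hp) (eta / (2 * (C + 1)))) as [M HM].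
  { apply Rdiv_lt_0_compat; lra. }
  destruct (big_b lam n (Rabs (ln (eta / 2)) + M * M + 1) Hl) as [b [Hb Hk]].
  { assert (0 <= M * M) by nra. assert (0 <= Rabs (ln (eta / 2))) by apply Rabs_pos. lra. }
  exists b. split; auto.
  assert (Hks := ks_nonneg lam n Hl).
  assert (Hg : gg lam n b <= eta / 2).
  { unfold gg. eapply Rle_trans. apply exp_le_inc. exact Hk.
    rewrite <- (exp_ln (eta / 2)) at 2 by lra. apply exp_le_inc.
    assert (H := Rle_abs (- ln (eta / 2))). rewrite Rabs_Ropp in H.
    assert (0 <= M * M) by nra. lra. }
  assert (HW : M < Wp lam n b).
  { destruct (Rlt_dec M 0). assert (0 <= Wp lam n b) by apply sqrt_pos. lra.
    apply Rnot_le_lt. intros HMW.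
    assert (HW0 : 0 <= Wp lam n b) by apply sqrt_pos.
    assert (Wp lam n b * Wp lam n b <= M * M) by nra.
    unfold Wp in *. rewrite sqrt_sqrt in H by (assert (H1 := ks_kk_nonneg lam n b Hl ltac:(assert (H2 := ts_pos lam n Hl); lra)); lra).
    assert (0 <= Rabs (ln (eta / 2))) by apply Rabs_pos. assert (0 <= M * M) by nra. lra. }
  specialize (HM (- Wp lam n b) ltac:(lra)).
  apply Rabs_lt_between in HM.
  unfold Psp. fold C.
  assert (C * (l - eta / (2 * (C + 1))) <= C * RInt Eg (- Wp lam n b) (aa lam n))
    by (apply Rmult_le_compat_l; lra).
  assert (C * (eta / (2 * (C + 1))) <= eta / 2).
  { replace (C * (eta / (2 * (C + 1)))) with (eta / 2 * (C / (C + 1))) by (field; lra).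
    assert (C / (C + 1) <= 1). { apply (Rmult_le_reg_r (C + 1)); [lra|].
      replace (C / (C + 1) * (C + 1)) with C by (field; lra). lra. }
    assert (0 < eta / 2) by lra. nra. }
  nra.
Qed.

Lemma inf0_unique f l1 l2 : improper_int_0_inf f l1 -> improper_int_0_inf f l2 -> l1 = l2.
Proof.
  intros H1 H2.
  apply Rminus_diag_uniq. apply Rabs_eq_0.
  apply Rle_antisym; [|apply Rabs_pos].
  apply Rnot_lt_le. intros Hlt.
  set (e := Rabs (l1 - l2) / 2).
  destruct (H1 e ltac:(unfold e; lra)) as [M1 HM1].
  destruct (H2 e ltac:(unfold e; lra)) as [M2 HM2].
  set (c := Rmax M1 M2 + 1).
  destruct (HM1 c) as [p1 Hp1]. { unfold c. assert (M1 <= Rmax M1 M2) by apply Rmax_l. lra. }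
  destruct (HM2 c) as [p2 Hp2]. { unfold c. assert (M2 <= Rmax M1 M2) by apply Rmax_r. lra. }
  rewrite (RiemannInt_P5 p1 p2) in Hp1.
  assert (Rabs (l1 - l2) <= Rabs (RiemannInt p2 - l2) + Rabs (RiemannInt p2 - l1)).
  { replace (l1 - l2) with ((RiemannInt p2 - l2) - (RiemannInt p2 - l1)) by ring.
    eapply Rle_trans; [apply Rabs_triang|]. rewrite Rabs_Ropp. lra. }
  unfold e in *. lra.
Qed.

Lemma erl_main lam n l : 0 < lam < n -> gauss_prop (aa lam n) l ->
  Rabs (lam * erlang_integral n lam - (1 + gam lam n * exp (ks lam n) * l))
    <= 2 * (gam lam n / sqrt n * exp (ks lam n)).
Proof.
  intros Hl Hp.
  set (Z := 1 + gam lam n * exp (ks lam n) * l).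
  set (err := 2 * (gam lam n / sqrt n * exp (ks lam n))).
  destruct (mono_lim (Ii lam n) 0 ((Z + err) / lam)) as [Iinf [H1 [H2 H3]]].
  - intros x y Hxy. apply Ii_mono; lra.
  - intros x Hx. apply (Rmult_le_reg_l lam); [lra|].
    replace (lam * ((Z + err) / lam)) with (Z + err) by (field; lra).
    apply Ii_upper; auto.
  - assert (HE : erlang_integral n lam = Iinf).
    { assert (Hi : improper_int_0_inf (ferl lam n) Iinf).
      { intros eps He. destruct (H3 eps He) as [M [HM0 HM]]. exists M.
        intros b Hb.
        assert (pr : Riemann_integrable (ferl lam n) 0 b).
        { apply continuity_implies_RiemannInt. lra. intros x Hx.
          apply continuity_pt_filterlim. apply ferl_cont. lra. }
        exists pr. rewrite <- RInt_Reals. apply HM. auto. }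
      apply (inf0_unique (ferl lam n)). 2: exact Hi.
      unfold erlang_integral. apply epsilon_spec. exists Iinf. exact Hi. }
    rewrite HE.
    assert (Hup : lam * Iinf <= Z + err).
    { apply (Rmult_le_compat_l lam) in H2; [|lra].
      replace (lam * ((Z + err) / lam)) with (Z + err) in H2 by (field; lra). lra. }
    assert (Hlow : Z - err <= lam * Iinf).
    { apply Rnot_lt_le. intros Hlt.
      set (eta := (Z - err - lam * Iinf) / 2).
      destruct (Psp_lower lam n l Hl Hp eta ltac:(unfold eta; lra)) as [b [Hb Hb2]].
      assert (Hts := ts_pos lam n Hl).
      assert (HD := D_bound2 lam n b Hl Hb). apply Rabs_le_between in HD.
      assert (Ii lam n b <= Iinf) by (apply H1; lra).
      fold Z err in Hb2, HD. unfold eta in Hb2. nra. }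
    apply Rabs_le. lra.
Qed.

Lemma Rmin_lip u v : v <= 1 -> Rabs (Rmin 1 u - v) <= Rabs (u - v).
Proof.
  intros Hv. unfold Rmin. destruct (Rle_dec 1 u).
  - rewrite !Rabs_pos_eq by lra. lra.
  - apply Rle_refl.
Qed.

Lemma inv_diff X Y : 0 < X -> 0 < Y -> Rabs (/ X - / Y) = Rabs (X - Y) / (X * Y).
Proof.
  intros HX HY. replace (/ X - / Y) with ((Y - X) / (X * Y)) by (field; lra).
  unfold Rdiv. rewrite Rabs_mult, Rabs_inv, (Rabs_pos_eq (X * Y)) by nra.
  rewrite Rabs_minus_sym. reflexivity.
Qed.

Lemma arith_main sn gam G e X : 8 <= sn -> 0 <= gam -> 1 <= e -> e / 2 <= G ->
  Rabs (X - (1 + gam * G)) <= 2 * (gam / sn * e) ->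
  1 <= 1 + gam * G - gam / (3 * sn) /\
  Rabs (Rmin 1 (/ X) - / (1 + gam * G - gam / (3 * sn))) <= 20 / sn.
Proof.
  intros Hsn Hg He HG HX.
  set (P := 1 + gam * G). set (Y := P - gam / (3 * sn)).
  set (q := gam * G / sn).
  assert (HG2 : 1/2 <= G) by lra.
  assert (Hq0 : 0 <= q) by (unfold q; apply Rmult_le_pos; [nra|left; apply Rinv_0_lt_compat; lra]).
  assert (Hqs : q * sn = gam * G) by (unfold q; field; lra).
  assert (HP : P = 1 + q * sn) by (unfold P; rewrite Hqs; ring).
  set (r := gam / sn).
  assert (Hr : 0 <= r) by (unfold r; apply Rmult_le_pos; [lra|left; apply Rinv_0_lt_compat; lra]).
  assert (Hqr : q = G * r) by (unfold q, r; field; lra).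
  assert (H1 : r * e <= 2 * q) by (rewrite Hqr; nra).
  assert (H2 : gam / (3 * sn) <= (2/3) * q).
  { replace (gam / (3 * sn)) with (r / 3) by (unfold r; field; lra). rewrite Hqr. nra. }
  assert (H3 : 0 <= gam / (3 * sn)) by (apply Rmult_le_pos; [lra|left; apply Rinv_0_lt_compat; lra]).
  assert (Hq8 : 8 * q <= q * sn) by nra.
  apply Rabs_le_between in HX. fold P r in HX.
  assert (HXP : P / 2 <= X) by (rewrite HP in *; lra).
  assert (HYP : P / 2 <= Y) by (unfold Y; rewrite HP in *; lra).
  assert (HY1 : 1 <= Y).
  { unfold Y, P. assert (gam / (3 * sn) <= gam * G); [|lra].
    rewrite <- Hqs. nra. }
  split; [exact HY1|].
  assert (HXY : Rabs (X - Y) <= 5 * q).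
  { apply Rabs_le. unfold Y. lra. }
  eapply Rle_trans. apply Rmin_lip. apply (Rmult_le_reg_r Y); [lra|].
    rewrite Rinv_l by lra. lra.
  assert (HPpos : 1 <= P) by (rewrite HP; nra).
  rewrite inv_diff by lra.
  assert (HXY2 : P * P / 4 <= X * Y) by nra.
  unfold Rdiv. apply (Rmult_le_reg_r (X * Y)); [nra|].
  rewrite Rmult_assoc, Rinv_l, Rmult_1_r by nra.
  apply Rle_trans with (5 * q); auto.
  assert (20 * / sn * (P * P / 4) = 5 * (P * P) / sn) by (field; lra).
  assert (5 * q <= 20 * / sn * (P * P / 4)).
  2: { apply Rle_trans with (20 * / sn * (P * P / 4)); auto. apply Rmult_le_compat_l; auto.
       apply Rmult_le_pos; [lra|left; apply Rinv_0_lt_compat; lra]. }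
  rewrite H.
  apply (Rmult_le_reg_r sn); [lra|].
  replace (5 * (P * P) / sn * sn) with (5 * (P * P)) by (field; lra).
  rewrite HP in *. nra.
Qed.

Lemma arith_LB sn gam G e c2 : 8 <= sn -> 0 <= gam -> 1 <= e -> e / 2 <= G -> 0 <= c2 <= 3 ->
  Rabs (/ (1 + gam * G - gam / (3 * sn)) -
        / (1 + gam * G - gam / (3 * sn) + gam * (c2 * e / (12 * (sn * sn) - 1)))) <= 2 / sn.
Proof.
  intros Hsn Hg He HG Hc.
  set (Y := 1 + gam * G - gam / (3 * sn)).
  set (E2 := gam * (c2 * e / (12 * (sn * sn) - 1))).
  assert (HD : 0 < 12 * (sn * sn) - 1) by nra.
  assert (Hr : 0 <= gam / (3 * sn)) by (apply Rmult_le_pos; [lra|left; apply Rinv_0_lt_compat; lra]).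
  assert (HY2 : gam * G / 2 <= Y).
  { unfold Y. assert (gam / (3 * sn) <= gam * G / 2); [|nra].
    replace (gam / (3 * sn)) with (gam * / (3 * sn)) by reflexivity.
    assert (/ (3 * sn) <= G / 2).
    { apply Rle_trans with (1/4); [|lra]. apply (Rmult_le_reg_r (3 * sn)); [lra|].
      rewrite Rinv_l by lra. lra. }
    nra. }
  assert (HY1 : 1 <= Y).
  { unfold Y. assert (gam / (3 * sn) <= gam * G); [|lra].
    replace (gam / (3 * sn)) with (gam * / (3 * sn)) by reflexivity.
    assert (/ (3 * sn) <= G).
    { apply Rle_trans with (1/2); [|lra]. apply (Rmult_le_reg_r (3 * sn)); [lra|].
      rewrite Rinv_l by lra. lra. }
    nra. }
  assert (HE0 : 0 <= E2).
  { unfold E2. apply Rmult_le_pos; auto. apply Rmult_le_pos. nra. left; apply Rinv_0_lt_compat; lra. }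
  assert (HE1 : E2 * (12 * (sn * sn) - 1) <= 12 * Y).
  { unfold E2. replace (gam * (c2 * e / (12 * (sn * sn) - 1)) * (12 * (sn * sn) - 1)) with (gam * c2 * e)
      by (field; lra).
    assert (gam * c2 * e <= gam * 3 * e).
    { apply Rmult_le_compat_r; [lra|]. apply Rmult_le_compat_l; lra. }
    assert (gam * e <= 2 * (gam * G)) by nra. nra. }
  rewrite inv_diff by lra.
  replace (Y - (Y + E2)) with (- E2) by ring. rewrite Rabs_Ropp, Rabs_pos_eq by lra.
  apply (Rmult_le_reg_r (Y * (Y + E2))); [nra|].
  unfold Rdiv at 1. rewrite Rmult_assoc, Rinv_l, Rmult_1_r by nra.
  apply Rle_trans with (2 / sn * Y).
  - apply (Rmult_le_reg_r sn); [lra|].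
    replace (2 / sn * Y * sn) with (2 * Y) by (field; lra).
    assert (E2 * (6 * sn) <= E2 * (12 * (sn * sn) - 1)) by (apply Rmult_le_compat_l; nra).
    lra.
  - apply Rmult_le_compat_l. apply Rmult_le_pos; [lra|left; apply Rinv_0_lt_compat; lra].
    nra.
Qed.

Lemma sqrt2pi_le3 : sqrt (2 * PI) <= 3.
Proof.
  rewrite <- (sqrt_square 3) by lra. apply sqrt_le_1_alt. assert (H := PI_4). lra.
Qed.

Lemma final_bounds beta lam : 0 < beta -> 64 <= lam ->
  Rabs (alpha_tilde beta lam - UB beta lam) <= 20 / sqrt (n_of beta lam) /\
  Rabs (UB beta lam - LB beta lam) <= 2 / sqrt (n_of beta lam).
Proof.
  intros Hb Hlam.
  set (n := n_of beta lam).
  assert (Hsl : 0 < sqrt lam) by (apply sqrt_lt_R0; lra).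
  assert (Hl : 0 < lam < n) by (unfold n, n_of; split; [lra|]; assert (0 < beta * sqrt lam) by nra; lra).
  set (sn := sqrt n).
  assert (Hsn : 8 <= sn).
  { unfold sn. rewrite <- (sqrt_square 8) by lra. apply sqrt_le_1_alt. lra. }
  assert (Hsn2 : sn * sn = n) by (unfold sn; apply sqrt_sqrt; lra).
  destruct (gauss_lim (aa lam n)) as [l Hp].
  assert (Hl2 := gauss_prop_half (aa lam n) l (aa_nonneg lam n) Hp).
  assert (Hks := ks_nonneg lam n Hl).
  set (e := exp (ks lam n)).
  assert (He : 1 <= e). { unfold e. rewrite <- exp_0. apply exp_le_inc. lra. }
  set (G := l * e).
  assert (HG : e / 2 <= G) by (unfold G; nra).
  assert (Hg : 0 <= gam lam n) by (apply gam_nonneg'; auto).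
  set (c2 := sqrt (2 * PI)).
  assert (Hc2 : 0 < c2) by apply sqrt2pi_pos.
  assert (Hc3 : c2 <= 3) by apply sqrt2pi_le3.
  assert (HX := erl_main lam n l Hl Hp).
  replace (gam lam n * exp (ks lam n) * l) with (gam lam n * G) in HX by (unfold G, e; ring).
  fold sn e in HX.
  assert (Ha : a_of beta lam = aa lam n).
  { unfold a_of, aa, rho_of, ks. fold n. f_equal. field. lra. }
  assert (HPhi : Phi (aa lam n) = l / c2) by (apply Phi_val; auto).
  assert (Hphi : phi (aa lam n) = 1 / (e * c2)).
  { unfold phi, aa. rewrite pow2_sqrt by lra.
    replace (- (2 * ks lam n) / 2) with (- ks lam n) by field.
    rewrite exp_Ropp. fold e c2. field. lra. }
  assert (Hgam : gamma_of beta lam = gam lam n) by reflexivity.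
  assert (HUB : UB beta lam = / (1 + gam lam n * G - gam lam n / (3 * sn))).
  { unfold UB. rewrite Ha, HPhi, Hphi, Hgam. fold n sn. unfold rho_of. fold n. f_equal.
    unfold G, gam. fold sn. rewrite <- Hsn2. field. repeat split; lra. }
  assert (HLB : LB beta lam = / (1 + gam lam n * G - gam lam n / (3 * sn) +
                                 gam lam n * (c2 * e / (12 * (sn * sn) - 1)))).
  { unfold LB. rewrite Ha, HPhi, Hphi, Hgam. fold n sn. unfold rho_of. fold n. f_equal.
    assert (0 < 12 * (sn * sn) - 1) by nra.
    unfold G, gam. fold sn. rewrite <- Hsn2. field. repeat split; lra. }
  assert (Halpha : alpha_tilde beta lam = Rmin 1 (/ (lam * erlang_integral n lam))).
  { reflexivity. }
  destruct (arith_main sn (gam lam n) G e (lam * erlang_integral n lam) Hsn Hg He HG HX) as [_ H1].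
  split.
  - rewrite Halpha, HUB. exact H1.
  - rewrite HUB, HLB. apply arith_LB; auto. lra.
Qed.

Theorem theorem3 :
  uniform_sup_limit_zero (fun beta lam => alpha_tilde beta lam - LB beta lam) /\
  uniform_sup_limit_zero (fun beta lam => UB beta lam - alpha_tilde beta lam).
Proof.
  assert (Hmain : forall eps, eps > 0 -> exists L, forall lam, lam > L -> forall beta, beta > 0 ->
    Rabs (alpha_tilde beta lam - LB beta lam) <= eps /\ Rabs (UB beta lam - alpha_tilde beta lam) <= eps).
  { intros eps He. exists (64 + (22 / eps) * (22 / eps)). intros lam Hlam beta Hb.
    assert (H0 : 0 <= (22 / eps) * (22 / eps)) by nra.
    destruct (final_bounds beta lam Hb ltac:(lra)) as [H1 H2].
    assert (Hsl : 0 < sqrt lam) by (apply sqrt_lt_R0; lra).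
    set (sn := sqrt (n_of beta lam)) in *.
    assert (Hsn : 22 / eps <= sn).
    { unfold sn. rewrite <- (sqrt_square (22 / eps)).
      2: { apply Rlt_le, Rdiv_lt_0_compat; lra. }
      apply sqrt_le_1_alt. unfold n_of. assert (0 <= beta * sqrt lam) by nra. lra. }
    assert (Hsp : 0 < sn) by (assert (0 < 22 / eps) by (apply Rdiv_lt_0_compat; lra); lra).
    assert (H22 : 22 / sn <= eps).
    { apply (Rmult_le_reg_r sn); auto. replace (22 / sn * sn) with 22 by (field; lra).
      apply (Rmult_le_compat_l eps) in Hsn; [|lra].
      replace (eps * (22 / eps)) with 22 in Hsn by (field; lra). lra. }
    assert (H20 : 20 / sn <= 18 / sn + 2 / sn) by (unfold Rdiv; assert (0 < / sn) by (apply Rinv_0_lt_compat; lra); lra).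
    assert (Hsum : 20 / sn + 2 / sn = 22 / sn) by (field; lra).
    assert (0 < 2 / sn) by (apply Rdiv_lt_0_compat; lra).
    split.
    - replace (alpha_tilde beta lam - LB beta lam) with
        ((alpha_tilde beta lam - UB beta lam) + (UB beta lam - LB beta lam)) by ring.
      eapply Rle_trans; [apply Rabs_triang|]. lra.
    - rewrite Rabs_minus_sym. lra. }
  split; intros eps He; destruct (Hmain eps He) as [L HL]; exists L; intros lam Hlam; split.
  - intros beta Hb. destruct (HL lam Hlam beta Hb) as [H _]. apply Rabs_le_between in H. lra.
  - exists 1. split; [lra|]. destruct (HL lam Hlam 1 ltac:(lra)) as [H _]. apply Rabs_le_between in H. lra.
  - intros beta Hb. destruct (HL lam Hlam beta Hb) as [_ H]. apply Rabs_le_between in H. lra.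
  - exists 1. split; [lra|]. destruct (HL lam Hlam 1 ltac:(lra)) as [_ H]. apply Rabs_le_between in H. lra.
Qed.
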